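(* There exist an (infinite) distributive meet-complemented lattice $A$ and an element $a\in A$ such that $\Box a$ does not exist, i.e., the set $\{b\in A: a\vee\neg b=1\}$ has no maximum.
   Context: A meet-complemented lattice is a lattice $(L,\le)$ such that for every $a\in L$ the element $\neg a=\max\{b\in L: a\wedge b\le c\ \text{for all } c\in L\}$ exists; it is bounded with top $1$. $\Box a$ denotes $\max\{b\in L: a\vee\neg b=1\}$ when it exists. *)

(* Defs.v *)
From HB Require Import structures.
From mathcomp Require Import all_boot all_order.
Set Implicit Arguments. Unset Strict Implicit. Unset Printing Implicit Defensive.
Import Order.TTheory.
Local Open Scope order_scope.

Definition is_max d (L : porderType d) (P : L -> Prop) (m : L) : Prop :=
  P m /\ forall b, P b -> b <= m.

Definition is_neg d (L : latticeType d) (a n : L) : Prop :=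
  is_max (fun b => forall c : L, a `&` b <= c) n.

Definition meet_complemented d (L : latticeType d) : Prop :=
  forall a : L, exists n : L, is_neg a n.

Definition is_box d (L : tbLatticeType d) (a m : L) : Prop :=
  is_max (fun b => exists nb : L, is_neg b nb /\ a `|` nb = \top) m.

Definition infinite_carrier (T : eqType) : Prop :=
  ~ exists s : seq T, forall x : T, x \in s.

(* Main.v *)
Require Import Defs.
From HB Require Import structures.
From mathcomp Require Import all_boot all_order.
From mathcomp Require Import finmap.
Set Implicit Arguments. Unset Strict Implicit. Unset Printing Implicit Defensive.

Lemma fresh (s : {fset nat}) : exists n, n \notin s.
Proof.
exists (sumn s).+1.
have H : forall l : seq nat, forall i, i \in l -> i <= sumn l.
  elim=> [|a l IH] i //=; rewrite in_cons => /orP [/eqP ->|/IH]; first exact: leq_addr.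
  move=> h; exact: leq_trans h (leq_addl _ _).
apply/negP=> /H; by rewrite ltnn.
Qed.

Inductive FC := Fin of {fset nat} | Cof of bool & {fset nat}.

Definition fc_enc (x : FC) : {fset nat} + (bool * {fset nat}) :=
  match x with Fin s => inl s | Cof f s => inr (f, s) end.
Definition fc_dec (y : {fset nat} + (bool * {fset nat})) : FC :=
  match y with inl s => Fin s | inr (f, s) => Cof f s end.
Lemma fc_encK : cancel fc_enc fc_dec. Proof. by case. Qed.
HB.instance Definition _ := Countable.copy FC (can_type fc_encK).

Definition fmem (x : FC) n := match x with Fin s => n \in s | Cof _ s => n \notin s end.
Definition flg (x : FC) := match x with Fin _ => false | Cof f _ => f end.

Lemma semE x y : (forall n, fmem x n = fmem y n) -> flg x = flg y -> x = y.
Proof.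
case: x => [s|f s]; case: y => [t|g t] /= H Hf.
- by congr Fin; apply/fsetP=> n; apply: H.
- have [n Hn] := fresh (fsetU s t); move: (H n); rewrite in_fsetU negb_or in Hn.
  by case/andP: Hn => /negbTE -> ->.
- have [n Hn] := fresh (fsetU s t); move: (H n); rewrite in_fsetU negb_or in Hn.
  by case/andP: Hn => /negbTE -> /negbTE ->.
- rewrite Hf; congr Cof; apply/fsetP=> n; by move: (H n); case: (n \in s); case: (n \in t).
Qed.

Definition fmeet x y := match x, y with
 | Fin s, Fin t => Fin (fsetI s t)
 | Fin s, Cof _ t => Fin (fsetD s t)
 | Cof _ s, Fin t => Fin (fsetD t s)
 | Cof f s, Cof g t => Cof (f && g) (fsetU s t) end.
Definition fjoin x y := match x, y with
 | Fin s, Fin t => Fin (fsetU s t)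
 | Fin s, Cof g t => Cof g (fsetD t s)
 | Cof f s, Fin t => Cof f (fsetD s t)
 | Cof f s, Cof g t => Cof (f || g) (fsetI s t) end.

Lemma memI x y n : fmem (fmeet x y) n = fmem x n && fmem y n.
Proof. case: x => [s|f s]; case: y => [t|g t] /=;
  rewrite ?in_fsetI ?in_fsetU ?in_fsetD; by case: (n \in s); case: (n \in t). Qed.
Lemma memU x y n : fmem (fjoin x y) n = fmem x n || fmem y n.
Proof. case: x => [s|f s]; case: y => [t|g t] /=;
  rewrite ?in_fsetI ?in_fsetU ?in_fsetD; by case: (n \in s); case: (n \in t). Qed.
Lemma flgI x y : flg (fmeet x y) = flg x && flg y.
Proof. by case: x => [s|f s]; case: y => [t|g t]; rewrite /= ?andbF ?orbF. Qed.
Lemma flgU x y : flg (fjoin x y) = flg x || flg y.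
Proof. by case: x => [s|f s]; case: y => [t|g t]; rewrite /= ?andbF ?orbF. Qed.

Ltac semt := apply: semE => [n|]; rewrite ?(memI, memU, flgI, flgU) /= ?in_fset0;
  repeat match goal with |- context [fmem ?x ?n] => case: (fmem x n) end;
  repeat match goal with |- context [flg ?x] => case: (flg x) end; by [].

Fact fc_display : Order.disp_t. Proof. exact: Order.Disp tt tt. Qed.
Definition fle x y := fmeet x y == x.
Definition flt x y := (y != x) && fle x y.
Lemma fle_def x y : fle x y = (fmeet x y == x). Proof. by []. Qed.
Lemma flt_def x y : flt x y = (y != x) && fle x y. Proof. by []. Qed.
Lemma fmeetC : commutative fmeet. Proof. move=> x y; semt. Qed.
Lemma fjoinC : commutative fjoin. Proof. move=> x y; semt. Qed.
Lemma fmeetA : associative fmeet. Proof. move=> x y z; semt. Qed.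
Lemma fjoinA : associative fjoin. Proof. move=> x y z; semt. Qed.
Lemma fjoinKI y x : fmeet x (fjoin x y) = x. Proof. semt. Qed.
Lemma fmeetKU y x : fjoin x (fmeet x y) = x. Proof. semt. Qed.
Lemma fmeetUl : left_distributive fmeet fjoin. Proof. move=> x y z; semt. Qed.
Lemma fmeetxx : idempotent_op fmeet. Proof. move=> x; semt. Qed.

HB.instance Definition _ := Order.isMeetJoinDistrLattice.Build fc_display FC
  fle_def flt_def fmeetC fjoinC fmeetA fjoinA fjoinKI fmeetKU fmeetUl fmeetxx.

Lemma fbot x : (Fin fset0 <= x)%O.
Proof. change (fle (Fin fset0) x); apply/eqP; semt. Qed.
Lemma ftop x : (x <= Cof true fset0)%O.
Proof. change (fle x (Cof true fset0)); apply/eqP; semt. Qed.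
HB.instance Definition _ := Order.hasBottom.Build fc_display FC fbot.
HB.instance Definition _ := Order.hasTop.Build fc_display FC ftop.

Import Order.TTheory.
Local Open Scope order_scope.

Lemma leP (x y : FC) : x <= y <-> (forall n, fmem x n -> fmem y n) /\ (flg x -> flg y).
Proof.
have -> : (x <= y) = fle x y by []. rewrite /fle; split.
- move=> /eqP E; split => [n|]; rewrite -E ?memI ?flgI; [by move=> /andP[]|by move=>/andP[]].
- move=> [H1 H2]; apply/eqP; apply: semE => [n|]; rewrite ?memI ?flgI.
  + by case E: (fmem x n) => //=; rewrite (H1 _ E).
  + by case E: (flg x) => //=; rewrite (H2 E).
Qed.

Definition compl (x : FC) := match x with Fin s => Cof true s | Cof _ s => Fin s end.

Lemma fin_noflag (b : FC) (s : {fset nat}) : (forall n, fmem b n -> n \in s) -> flg b = false.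
Proof.
case: b => [t|g t] //= H.
have [n Hn] := fresh (fsetU s t); rewrite in_fsetU negb_or in Hn.
case/andP: Hn => /negbTE Hs Ht. by move: (H n Ht); rewrite Hs.
Qed.

Lemma negx (x : FC) : is_neg x (compl x).
Proof.
split.
- move=> c; have -> : x `&` compl x = Fin fset0.
    change (fmeet x (compl x) = Fin fset0).
    apply: semE => [n|]; rewrite ?memI ?flgI /= ?in_fset0;
     case: x => [s|f s] /=; rewrite ?andbF ?andbN ?andNb //.
  exact: fbot.
- move=> b /(_ (Fin fset0)) /leP [H1 _].
  have H1' : forall n, fmem (fmeet x b) n -> false.
    by move=> n /H1; rewrite /= in_fset0.
  apply/leP; split.
  + move=> n Hb; have := H1' n.
    rewrite memI Hb andbT; case: x {H1 H1'} => [s|f s] /=.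
    * by move=> HH; case: (boolP (n \in s)) => // H; case: (HH H).
    * by move=> HH; case: (boolP (n \in s)) => // H; case: (HH H).
  + case: x H1 H1' => [s|f s] _ H1; first by move=> _.
    move=> Hf; suff : flg b = false by rewrite Hf.
    apply: (@fin_noflag b s) => n Hb; have := H1 n.
    rewrite memI Hb andbT /= => HH; case: (boolP (n \in s)) => // H; case: (HH H).
Qed.

Lemma neg_uniq (x n : FC) : is_neg x n -> n = compl x.
Proof.
move=> [H1 H2]; have [H3 H4] := negx x.
by apply: le_anti; rewrite (H4 _ H1) (H2 _ H3).
Qed.

Lemma infFC : infinite_carrier FC.
Proof.
move=> [s Hs].
have U : uniq [seq Fin [fset i]%fset | i <- iota 0 (size s).+1].
  rewrite map_inj_uniq ?iota_uniq // => i j E.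
  have : fmem (Fin [fset i]%fset) i by rewrite /= in_fset1.
  by rewrite E /= in_fset1 => /eqP.
have := uniq_leq_size U (fun x _ => Hs x).
by rewrite size_map size_iota ltnn.
Qed.

Theorem proposition14 :
  exists (d : Order.disp_t) (A : tbDistrLatticeType d),
    infinite_carrier A /\ meet_complemented A /\
    exists a : A, ~ (exists m : A, is_box a m).
Proof.
exists fc_display, FC; split; first exact: infFC.
split; first by move=> a; exists (compl a); exact: negx.
exists (Cof false fset0) => -[m [[nb [Hnb Htop]] Hmax]].
move/neg_uniq: Hnb => Enb; subst nb.
case: m Htop Hmax => [s|f s] Htop Hmax.
- have [k Hk] := fresh s.
  have : Fin [fset k]%fset <= Fin s.
    apply: Hmax; exists (Cof true [fset k]%fset); split; first exact: (negx (Fin [fset k]%fset)).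
    change (fjoin (Cof false fset0) (Cof true [fset k]%fset) = Cof true fset0).
    by apply: semE => [n|] //; rewrite memU /= ?in_fset0.
  move/leP => [H _]; move: (H k); rewrite /= in_fset1 eqxx (negbTE Hk).
  by move=> /(_ isT).
- move: (congr1 flg Htop).
  by change (flg (fjoin (Cof false fset0) (Fin s)) = true -> False).
Qed.
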